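(* Let $E$ and $F$ be weighted geometric mean closed Archimedean vector lattices over $\mathbb{K}$, let $n\in\mathbb{N}$, and let $r_1,\dots,r_n\in(0,1)$ with $\sum_{k=1}^n r_k=1$. (1) For every positive linear map $T\colon E\to F$ and all $f_1,\dots,f_n\in E$: $T\bigl(\triangle_{k=1}^n(f_k,r_k)\bigr)\le\triangle_{k=1}^n\bigl(T(|f_k|),r_k\bigr)$. (2) A linear map $T\colon E\to F$ is a vector lattice homomorphism if and only if $T\bigl(\triangle_{k=1}^n(f_k,r_k)\bigr)=\triangle_{k=1}^n\bigl(T(f_k),r_k\bigr)$ for all $f_1,\dots,f_n\in E$. (3) If $G$ is a (not necessarily weighted geometric mean closed) vector sublattice of $E$, $T\colon G\to F$ is a vector lattice homomorphism, and $f_1,\dots,f_n\in G$ with $\triangle_{k=1}^n(f_k,r_k)\in G$, then $T\bigl(\triangle_{k=1}^n(f_k,r_k)\bigr)=\triangle_{k=1}^n\bigl(T(f_k),r_k\bigr)$.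
   Context: $\mathbb{K}$ denotes $\mathbb{R}$ or $\mathbb{C}$. An Archimedean real vector lattice $E$ is square mean closed if $\sup\{(\cos\theta)f+(\sin\theta)g:\theta\in[0,2\pi]\}$ exists in $E$ for all $f,g\in E$. An Archimedean vector lattice over $\mathbb{C}$ is a complex vector space $E+iE$ (complexification) where $E$ is a square mean closed Archimedean real vector lattice; its modulus is $|f+ig|=\sup\{(\cos\theta)f+(\sin\theta)g:\theta\in[0,2\pi]\}$. An Archimedean vector lattice over $\mathbb{R}$ is an Archimedean real vector lattice with $|f|=f\vee(-f)$. For such $E$: $E^{+}=\{f\in E:|f|=f\}$, $E_\rho=\{f-g:f,g\in E^+\}$, ordered as a real vector lattice; infima are in $E_\rho$. $E$ is weighted geometric mean closed if for every $n$, all $f_1,\dots,f_n\in E$ and all $r_1,\dots,r_n\in(0,1)$ with $\sum r_k=1$, the infimum $\triangle_{k=1}^n(f_k,r_k):=\inf\{\sum_{k=1}^n r_k\theta_k|f_k|:\theta_k\in(0,\infty),\ \prod_{k=1}^n\theta_k^{r_k}=1\}$ exists in $E$. A linear map $T$ is positive if $T(E^+)\subseteq F^+$; it is a vector lattice homomorphism if $|T(f)|=T(|f|)$ for all $f$. A vector sublattice of $E$ is a $\mathbb{K}$-linear subspace closed under the modulus. *)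

(* Defs.v *)
From Stdlib Require Import Reals Lra ClassicalEpsilon.
Open Scope R_scope.
Set Implicit Arguments.

Record RVL := {
  rv_car :> Type;
  rv_zero : rv_car;
  rv_add : rv_car -> rv_car -> rv_car;
  rv_opp : rv_car -> rv_car;
  rv_scal : R -> rv_car -> rv_car;
  rv_le : rv_car -> rv_car -> Prop;
  rv_join : rv_car -> rv_car -> rv_car;
  rv_addA : forall x y z, rv_add x (rv_add y z) = rv_add (rv_add x y) z;
  rv_addC : forall x y, rv_add x y = rv_add y x;
  rv_add0 : forall x, rv_add x rv_zero = x;
  rv_addN : forall x, rv_add x (rv_opp x) = rv_zero;
  rv_scal1 : forall x, rv_scal 1 x = x;
  rv_scalA : forall a b x, rv_scal a (rv_scal b x) = rv_scal (a * b) x;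
  rv_scalDr : forall a x y, rv_scal a (rv_add x y) = rv_add (rv_scal a x) (rv_scal a y);
  rv_scalDl : forall a b x, rv_scal (a + b) x = rv_add (rv_scal a x) (rv_scal b x);
  rv_le_refl : forall x, rv_le x x;
  rv_le_anti : forall x y, rv_le x y -> rv_le y x -> x = y;
  rv_le_trans : forall x y z, rv_le x y -> rv_le y z -> rv_le x z;
  rv_le_add : forall x y z, rv_le x y -> rv_le (rv_add x z) (rv_add y z);
  rv_le_scal : forall a x, 0 <= a -> rv_le rv_zero x -> rv_le rv_zero (rv_scal a x);
  rv_join_l : forall x y, rv_le x (rv_join x y);
  rv_join_r : forall x y, rv_le y (rv_join x y);
  rv_join_lub : forall x y z, rv_le x z -> rv_le y z -> rv_le (rv_join x y) z;
  rv_archi : forall x y, rv_le rv_zero x ->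
     (forall n : nat, rv_le (rv_scal (INR n) x) y) -> x = rv_zero
}.

Arguments rv_zero {r}.

Definition rv_is_sup (E : RVL) (S : E -> Prop) (s : E) : Prop :=
  (forall h, S h -> rv_le E h s) /\
  (forall u, (forall h, S h -> rv_le E h u) -> rv_le E s u).

Definition sm_set (E : RVL) (f g : E) : E -> Prop :=
  fun h => exists theta, 0 <= theta <= 2 * PI /\
     h = rv_add E (rv_scal E (cos theta) f) (rv_scal E (sin theta) g).

Definition square_mean_closed (E : RVL) : Prop :=
  forall f g : E, exists s, @rv_is_sup E (@sm_set E f g) s.

(** the square mean  sup{ cos(t) f + sin(t) g : t in [0,2pi] }  (chosen when it exists) *)
Definition sm_sup (E : RVL) (f g : E) : E :=
  epsilon (inhabits (@rv_zero E)) (fun s => @rv_is_sup E (@sm_set E f g) s).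

Inductive Kfield := KR | KC.

(** scalars: R, or C represented as pairs (re, im) *)
Definition Kscal (K : Kfield) : Type :=
  match K with KR => R | KC => (R * R)%type end.

(** the vector lattice over K built on E: E itself, or its complexification E + iE *)
Definition Vc (K : Kfield) (E : RVL) : Type :=
  match K with KR => rv_car E | KC => (rv_car E * rv_car E)%type end.

Definition KVL_ok (K : Kfield) (E : RVL) : Prop :=
  match K with KR => True | KC => square_mean_closed E end.

Definition vzero {K E} : Vc K E :=
  match K return Vc K E with
  | KR => @rv_zero E
  | KC => (@rv_zero E, @rv_zero E)
  end.

Definition vadd {K E} : Vc K E -> Vc K E -> Vc K E :=
  match K return Vc K E -> Vc K E -> Vc K E with
  | KR => fun x y => rv_add E x y
  | KC => fun x y => (rv_add E (fst x) (fst y), rv_add E (snd x) (snd y))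
  end.

Definition vopp {K E} : Vc K E -> Vc K E :=
  match K return Vc K E -> Vc K E with
  | KR => fun x => rv_opp E x
  | KC => fun x => (rv_opp E (fst x), rv_opp E (snd x))
  end.

Definition vsub {K E} (x y : Vc K E) : Vc K E := vadd x (vopp y).

(** multiplication by a scalar of K;  (a+ib)(f+ig) = (af - bg) + i(bf + ag) *)
Definition vscal {K E} : Kscal K -> Vc K E -> Vc K E :=
  match K return Kscal K -> Vc K E -> Vc K E with
  | KR => fun a x => rv_scal E a x
  | KC => fun c x =>
      (rv_add E (rv_scal E (fst c) (fst x)) (rv_opp E (rv_scal E (snd c) (snd x))),
       rv_add E (rv_scal E (snd c) (fst x)) (rv_scal E (fst c) (snd x)))
  end.

Definition vrscal {K E} : R -> Vc K E -> Vc K E :=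
  match K return R -> Vc K E -> Vc K E with
  | KR => fun a x => rv_scal E a x
  | KC => fun a x => (rv_scal E a (fst x), rv_scal E a (snd x))
  end.

Definition vabs {K E} : Vc K E -> Vc K E :=
  match K return Vc K E -> Vc K E with
  | KR => fun x => rv_join E x (rv_opp E x)
  | KC => fun x => (@sm_sup E (fst x) (snd x), @rv_zero E)
  end.

Definition vpos {K E} (f : Vc K E) : Prop := vabs f = f.

Definition in_rho {K E} (f : Vc K E) : Prop :=
  exists g h, vpos g /\ vpos h /\ f = vsub g h.

Definition vle {K E} (f g : Vc K E) : Prop := vpos (vsub g f).

Definition is_inf_rho {K E} (S : Vc K E -> Prop) (x : Vc K E) : Prop :=
  in_rho x /\ (forall s, S s -> vle x s) /\
  (forall y, in_rho y -> (forall s, S s -> vle y s) -> vle y x).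

Fixpoint sumR (n : nat) (g : nat -> R) : R :=
  match n with O => 0 | S m => sumR m g + g m end.
Fixpoint prodR (n : nat) (g : nat -> R) : R :=
  match n with O => 1 | S m => prodR m g * g m end.
Fixpoint sumV {K E} (n : nat) (g : nat -> Vc K E) : Vc K E :=
  match n with O => vzero | S m => vadd (sumV m g) (g m) end.

Definition wgm_set {K E} (n : nat) (f : nat -> Vc K E) (r : nat -> R) : Vc K E -> Prop :=
  fun s => exists theta : nat -> R,
    (forall k, (k < n)%nat -> 0 < theta k) /\
    prodR n (fun k => Rpower (theta k) (r k)) = 1 /\
    s = sumV n (fun k => vrscal (r k * theta k) (vabs (f k))).

Definition is_wgm {K E} (n : nat) (f : nat -> Vc K E) (r : nat -> R) (x : Vc K E) : Prop :=
  is_inf_rho (wgm_set n f r) x.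

Definition wgm_closed (K : Kfield) (E : RVL) : Prop :=
  forall (n : nat) (f : nat -> Vc K E) (r : nat -> R),
    (forall k, (k < n)%nat -> 0 < r k < 1) -> sumR n r = 1 ->
    exists x, is_wgm n f r x.

Definition Klinear {K E F} (T : Vc K E -> Vc K F) : Prop :=
  (forall x y, T (vadd x y) = vadd (T x) (T y)) /\
  (forall (c : Kscal K) x, T (vscal c x) = vscal c (T x)).

Definition positive_map {K E F} (T : Vc K E -> Vc K F) : Prop :=
  forall f, vpos f -> vpos (T f).

Definition vl_hom {K E F} (T : Vc K E -> Vc K F) : Prop :=
  forall f, vabs (T f) = T (vabs f).

Definition sublattice {K E} (G : Vc K E -> Prop) : Prop :=
  G vzero /\ (forall x y, G x -> G y -> G (vadd x y)) /\
  (forall (c : Kscal K) x, G x -> G (vscal c x)) /\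
  (forall x, G x -> G (vabs x)).

(** maps defined on a sublattice G (represented as total functions, only values on G matter) *)
Definition Klinear_on {K E F} (G : Vc K E -> Prop) (T : Vc K E -> Vc K F) : Prop :=
  (forall x y, G x -> G y -> T (vadd x y) = vadd (T x) (T y)) /\
  (forall (c : Kscal K) x, G x -> T (vscal c x) = vscal c (T x)).

Definition vl_hom_on {K E F} (G : Vc K E -> Prop) (T : Vc K E -> Vc K F) : Prop :=
  forall f, G f -> vabs (T f) = T (vabs f).

(* Main.v *)
Require Import Defs.
From Stdlib Require Import Reals Lra Lia List ClassicalEpsilon.
Import ListNotations.
Open Scope R_scope.

Section Alg.
Variable E : RVL.
Local Notation "x +v y" := (rv_add E x y) (at level 50, left associativity).
Local Notation "-v x" := (rv_opp E x) (at level 35, right associativity).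
Local Notation "c *v x" := (rv_scal E c x) (at level 40, left associativity).
Local Notation "x <=v y" := (rv_le E x y) (at level 70).
Notation z := (@rv_zero E).

Lemma add0l x : z +v x = x.
Proof. rewrite rv_addC; apply rv_add0. Qed.
Lemma addNl x : -v x +v x = z.
Proof. rewrite rv_addC; apply rv_addN. Qed.
Lemma add_cancel x y w : x +v w = y +v w -> x = y.
Proof.
  intros H. rewrite <- (rv_add0 E x), <- (rv_add0 E y), <- (rv_addN E w), !rv_addA, H; auto.
Qed.
Lemma scal0l x : 0 *v x = z.
Proof.
  apply (add_cancel _ _ (0 *v x)). rewrite <- rv_scalDl, Rplus_0_l, add0l; auto.
Qed.
Lemma scal0r c : c *v z = z.
Proof.
  apply (add_cancel _ _ (c *v z)). rewrite <- rv_scalDr, !add0l; auto.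
Qed.
Lemma oppE x : -v x = (-1) *v x.
Proof.
  apply (add_cancel _ _ x). rewrite addNl. pattern x at 2. rewrite <- (rv_scal1 E x).
  rewrite <- rv_scalDl. replace (-1+1) with 0 by ring. rewrite scal0l; auto.
Qed.

Inductive vexp := VAtom (i : nat) | VZero | VAdd (a b : vexp) | VOpp (a : vexp) | VScal (c : R) (a : vexp).
Fixpoint veval (env : list E) (e : vexp) : E :=
  match e with
  | VAtom i => nth i env z
  | VZero => z
  | VAdd a b => veval env a +v veval env b
  | VOpp a => -v veval env a
  | VScal c a => c *v veval env a
  end.
Fixpoint vcoef (e : vexp) (j : nat) : R :=
  match e with
  | VAtom i => if Nat.eqb j i then 1 else 0
  | VZero => 0
  | VAdd a b => vcoef a j + vcoef b j
  | VOpp a => - vcoef a j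
  | VScal c a => c * vcoef a j
  end%R.
Fixpoint lin (env : list E) (cf : nat -> R) : E :=
  match env with
  | [] => z
  | a :: l => cf O *v a +v lin l (fun i => cf (S i))
  end.

Lemma lin_add env : forall f g, lin env (fun i => f i + g i)%R = lin env f +v lin env g.
Proof.
  induction env as [|a l IH]; intros f g; simpl.
  - rewrite add0l; auto.
  - rewrite IH, rv_scalDl. rewrite !rv_addA. f_equal.
    rewrite <- !rv_addA. f_equal. apply rv_addC.
Qed.
Lemma lin_scal env : forall c f, lin env (fun i => c * f i)%R = c *v lin env f.
Proof.
  induction env as [|a l IH]; intros c f; simpl.
  - rewrite scal0r; auto.
  - rewrite IH, rv_scalDr, rv_scalA; auto.
Qed.
Lemma lin_ext env : forall f g, (forall i, (i < length env)%nat -> f i = g i) -> lin env f = lin env g.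
Proof.
  induction env as [|a l IH]; intros f g H; simpl; auto.
  rewrite (H O) by (simpl; lia). f_equal. apply IH. intros i Hi; apply H; simpl; lia.
Qed.
Lemma lin_zero env : lin env (fun _ => 0%R) = z.
Proof. induction env; simpl; auto. rewrite IHenv, scal0l, add0l; auto. Qed.
Lemma lin_atom env : forall i, lin env (fun j => if Nat.eqb j i then 1 else 0)%R = nth i env z.
Proof.
  induction env as [|a l IH]; intros i; simpl.
  - destruct i; auto.
  - destruct i as [|i]; simpl.
    + rewrite rv_scal1, lin_zero, rv_add0; auto.
    + rewrite scal0l, add0l. rewrite <- IH. apply lin_ext. intros j _. simpl. auto.
Qed.
Lemma veval_lin env e : veval env e = lin env (vcoef e).
Proof.
  induction e; simpl.
  - rewrite lin_atom; auto.
  - rewrite lin_zero; auto.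
  - rewrite lin_add, IHe1, IHe2; auto.
  - rewrite oppE, IHe. rewrite <- lin_scal. apply lin_ext; intros; ring.
  - rewrite IHe, lin_scal; auto.
Qed.
Lemma veval_eq env e1 e2 : (forall i, (i < length env)%nat -> vcoef e1 i = vcoef e2 i) -> veval env e1 = veval env e2.
Proof. intros H. rewrite !veval_lin. apply lin_ext; auto. Qed.

End Alg.

Ltac vlookup x l :=
  lazymatch l with
  | (x :: _) => constr:(O)
  | (_ :: ?l') => let n := vlookup x l' in constr:(S n)
  end.
Ltac vreify E env t :=
  lazymatch t with
  | rv_add _ ?a ?b => let ra := vreify E env a in let rb := vreify E env b in constr:(VAdd ra rb)
  | rv_opp _ ?a => let ra := vreify E env a in constr:(VOpp ra)
  | rv_scal _ ?c ?a => let ra := vreify E env a in constr:(VScal c ra)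
  | @rv_zero _ => constr:(VZero)
  | _ => let i := vlookup t env in constr:(VAtom i)
  end.
Ltac vring env :=
  lazymatch goal with
  | |- @eq (rv_car ?E) ?l ?r =>
    let el := vreify E env l in let er := vreify E env r in
    change (@veval E env el = @veval E env er); apply veval_eq;
    let i := fresh "i" in let Hi := fresh "Hi" in
    intros i Hi; simpl in Hi;
    repeat (first [exfalso; lia | destruct i as [|i]; [simpl; field; lra|]])
  end.


Section Ord.
Variable E : RVL.
Local Notation "x +v y" := (rv_add E x y) (at level 50, left associativity).
Local Notation "-v x" := (rv_opp E x) (at level 35, right associativity).
Local Notation "c *v x" := (rv_scal E c x) (at level 40, left associativity).
Local Notation "x <=v y" := (rv_le E x y) (at level 70).
Local Notation z := (@rv_zero E).

Lemma le_sub x y : x <=v y <-> z <=v y +v -v x.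
Proof.
  split; intros H.
  - rewrite <- (rv_addN E x). apply rv_le_add; auto.
  - rewrite <- (add0l E x). replace y with ((y +v -v x) +v x) by vring [x;y]. apply rv_le_add; auto.
Qed.
Lemma le_of_diff p q a b : p <=v q -> b +v -v a = q +v -v p -> a <=v b.
Proof. intros H1 H2. apply (proj2 (le_sub a b)). rewrite H2. apply (proj1 (le_sub p q)); auto. Qed.
Lemma le_of_pos d a b : z <=v d -> b +v -v a = d -> a <=v b.
Proof. intros H1 H2. apply (le_of_diff z d); auto. rewrite H2. vring [d]. Qed.
Lemma pos_add a b : z <=v a -> z <=v b -> z <=v a +v b.
Proof.
  intros Ha Hb. apply (rv_le_trans E _ b); auto. apply (le_of_pos a); auto. vring [a;b].
Qed.
Lemma le_add2 a b c d : a <=v b -> c <=v d -> a +v c <=v b +v d.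
Proof.
  intros H1 H2. apply le_sub in H1. apply le_sub in H2.
  apply (le_of_pos ((b +v -v a) +v (d +v -v c))). apply pos_add; auto. vring [a;b;c;d].
Qed.
Lemma le_scal c x y : 0 <= c -> x <=v y -> c *v x <=v c *v y.
Proof.
  intros Hc H. apply le_sub in H. apply (le_of_pos (c *v (y +v -v x))).
  apply rv_le_scal; auto. vring [x;y].
Qed.
Lemma le_scal_l c d x : c <= d -> z <=v x -> c *v x <=v d *v x.
Proof.
  intros Hc H. apply (le_of_pos ((d - c) *v x)). apply rv_le_scal; auto; lra. vring [x].
Qed.
Lemma le_opp x y : x <=v y -> -v y <=v -v x.
Proof. intros H. apply le_sub in H. apply (le_of_pos (y +v -v x)); auto. vring [x;y]. Qed.
Lemma pos_half x : z <=v x +v x -> z <=v x.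
Proof.
  intros H. replace x with ((/2) *v (x +v x)) by vring [x]. apply rv_le_scal; auto; lra.
Qed.

Definition absE (x : E) : E := rv_join E x (-v x).
Lemma abs_ge x : x <=v absE x. Proof. apply rv_join_l. Qed.
Lemma abs_geN x : -v x <=v absE x. Proof. apply rv_join_r. Qed.
Lemma abs_lub x u : x <=v u -> -v x <=v u -> absE x <=v u.
Proof. apply rv_join_lub. Qed.
Lemma abs_pos x : z <=v absE x.
Proof.
  apply pos_half. apply (rv_le_trans E _ (x +v -v x)).
  rewrite rv_addN; apply rv_le_refl. apply le_add2; [apply abs_ge|apply abs_geN].
Qed.
Lemma abs_id x : z <=v x -> absE x = x.
Proof.
  intros H. apply rv_le_anti; [|apply abs_ge]. apply abs_lub. apply rv_le_refl.
  apply (rv_le_trans E _ z); auto. apply (le_of_pos x); auto. vring [x].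
Qed.
Lemma abs_id_inv x : absE x = x -> z <=v x.
Proof. intros H. rewrite <- H. apply abs_pos. Qed.
Lemma abs_cos c x : -1 <= c <= 1 -> c *v x <=v absE x.
Proof.
  intros Hc. destruct (Rle_dec 0 c).
  - apply (rv_le_trans E _ (c *v absE x)). apply le_scal; auto; apply abs_ge.
    replace (absE x) with (1 *v absE x) at 2 by apply rv_scal1. apply le_scal_l. lra. apply abs_pos.
  - replace (c *v x) with ((-c) *v (-v x)) by vring [x].
    apply (rv_le_trans E _ ((-c) *v absE x)). apply le_scal; [lra|apply abs_geN].
    replace (absE x) with (1 *v absE x) at 2 by apply rv_scal1. apply le_scal_l. lra. apply abs_pos.
Qed.
Lemma pos_decomp x : exists p q, z <=v p /\ z <=v q /\ x = p +v -v q.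
Proof.
  exists ((/2) *v (absE x +v x)), ((/2) *v (absE x +v -v x)). split; [|split].
  - apply rv_le_scal; [lra|]. apply (le_of_pos (absE x +v x)). 2: vring [absE x; x].
    apply (le_of_pos (absE x +v x)). 2: vring [absE x; x].
    apply (rv_le_trans E _ (-v x +v x)). rewrite addNl; apply rv_le_refl.
    apply rv_le_add, abs_geN.
  - apply rv_le_scal; [lra|]. apply (le_of_pos (absE x +v -v x)). 2: vring [absE x; x].
    apply (le_of_pos (absE x +v -v x)). 2: vring [absE x; x].
    apply (rv_le_trans E _ (x +v -v x)). rewrite rv_addN; apply rv_le_refl.
    apply rv_le_add, abs_ge.
  - vring [absE x; x].
Qed.

Definition minE (x y : E) : E := (/2) *v (x +v y +v -v absE (x +v -v y)).
Lemma min_le_l x y : minE x y <=v x.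
Proof.
  apply (le_of_diff ((/2) *v -v (x +v -v y)) ((/2) *v absE (x +v -v y))). apply le_scal; [lra|apply abs_geN].
  unfold minE. vring [x; y; absE (x +v -v y)].
Qed.
Lemma min_le_r x y : minE x y <=v y.
Proof.
  apply (le_of_diff ((/2) *v (x +v -v y)) ((/2) *v absE (x +v -v y))). apply le_scal; [lra|apply abs_ge].
  unfold minE. vring [x; y; absE (x +v -v y)].
Qed.
Lemma min_glb w x y : w <=v x -> w <=v y -> w <=v minE x y.
Proof.
  intros H1 H2. apply le_sub in H1. apply le_sub in H2.
  assert (Ha : absE (x +v -v y) <=v (x +v -v w) +v (y +v -v w)).
  { apply abs_lub.
    - apply (le_of_pos ((y +v -v w) +v (y +v -v w))). apply pos_add; auto. vring [x;y;w].
    - apply (le_of_pos ((x +v -v w) +v (x +v -v w))). apply pos_add; auto. vring [x;y;w]. }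
  apply le_sub in Ha. apply (le_of_pos ((/2) *v ((x +v -v w +v (y +v -v w)) +v -v absE (x +v -v y)))).
  apply rv_le_scal; auto; lra. unfold minE. vring [x;y;w;absE (x +v -v y)].
Qed.

Lemma is_sup_unique S s1 s2 : rv_is_sup E S s1 -> rv_is_sup E S s2 -> s1 = s2.
Proof. intros [A1 B1] [A2 B2]. apply rv_le_anti; auto. Qed.

Lemma sm_sup_real d : sm_sup E d z = absE d.
Proof.
  assert (Hs : rv_is_sup E (sm_set E d z) (absE d)).
  { split.
    - intros h [t [_ ->]]. rewrite scal0r, rv_add0. apply abs_cos, COS_bound.
    - intros u Hu. apply abs_lub.
      + apply Hu. exists 0. split. split; [lra|]. pose proof PI_RGT_0; lra.
        rewrite cos_0, sin_0, scal0r, rv_add0, rv_scal1; auto.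
      + apply Hu. exists PI. split. pose proof PI_RGT_0; lra.
        rewrite cos_PI, sin_PI, scal0r, rv_add0, oppE; auto. }
  apply (is_sup_unique (sm_set E d z)); auto. unfold sm_sup. apply epsilon_spec. eauto.
Qed.

Lemma sm_sup_spec a b : square_mean_closed E -> rv_is_sup E (sm_set E a b) (sm_sup E a b).
Proof. intros H. unfold sm_sup. apply epsilon_spec. apply H. Qed.

Lemma sm_sup_pos a b : square_mean_closed E -> z <=v sm_sup E a b.
Proof.
  intros H. destruct (sm_sup_spec a b H) as [H1 _]. apply pos_half.
  apply (rv_le_trans E _ (a +v -v a)). rewrite rv_addN; apply rv_le_refl.
  apply le_add2.
  - apply H1. exists 0. split. split; [lra|]. pose proof PI_RGT_0; lra.
    rewrite cos_0, sin_0, scal0l, rv_add0, rv_scal1; auto.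
  - apply H1. exists PI. split. pose proof PI_RGT_0; lra.
    rewrite cos_PI, sin_PI, scal0l, rv_add0, oppE; auto.
Qed.

Lemma archiE d c : z <=v d -> (forall m : nat, INR m *v d <=v c) -> d = z.
Proof. apply rv_archi. Qed.

End Ord.

Definition re {K E} : Vc K E -> rv_car E :=
  match K return Vc K E -> rv_car E with KR => fun x => x | KC => fun x => fst x end.
Definition im {K E} : Vc K E -> rv_car E :=
  match K return Vc K E -> rv_car E with KR => fun _ => @rv_zero E | KC => fun x => snd x end.
Definition mkV {K E} : rv_car E -> Vc K E :=
  match K return rv_car E -> Vc K E with KR => fun x => x | KC => fun x => (x, @rv_zero E) end.
Definition kemb {K} : R -> Kscal K :=
  match K return R -> Kscal K with KR => fun c => c | KC => fun c => (c, 0) end.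

Section VcBase.
Variable K : Kfield.
Variable E : RVL.
Local Notation V := (Vc K E).
Local Notation z := (@rv_zero E).

Lemma vext (a b : V) : re a = re b -> im a = im b -> a = b.
Proof. destruct K; simpl; auto. destruct a, b; simpl; intros; subst; auto. Qed.
Lemma re_add (a b : V) : re (vadd a b) = rv_add E (re a) (re b). Proof. destruct K; auto. Qed.
Lemma im_add (a b : V) : im (vadd a b) = rv_add E (im a) (im b).
Proof. destruct K; simpl; auto. rewrite rv_add0; auto. Qed.
Lemma re_opp (a : V) : re (vopp a) = rv_opp E (re a). Proof. destruct K; auto. Qed.
Lemma im_opp (a : V) : im (vopp a) = rv_opp E (im a).
Proof. destruct K; simpl; auto. rewrite <- (rv_add0 E (rv_opp E z)), addNl; auto. Qed.
Lemma re_sub (a b : V) : re (vsub a b) = rv_add E (re a) (rv_opp E (re b)). Proof. destruct K; auto. Qed.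
Lemma im_sub (a b : V) : im (vsub a b) = rv_add E (im a) (rv_opp E (im b)).
Proof. unfold vsub. rewrite im_add, im_opp; auto. Qed.
Lemma re_rscal c (a : V) : re (vrscal c a) = rv_scal E c (re a). Proof. destruct K; auto. Qed.
Lemma im_rscal c (a : V) : im (vrscal c a) = rv_scal E c (im a).
Proof. destruct K; simpl; auto. rewrite scal0r; auto. Qed.
Lemma re_zero : re (@vzero K E) = z. Proof. destruct K; auto. Qed.
Lemma im_zero : im (@vzero K E) = z. Proof. destruct K; auto. Qed.
Lemma re_mk x : re (@mkV K E x) = x. Proof. destruct K; auto. Qed.
Lemma im_mk x : im (@mkV K E x) = z. Proof. destruct K; auto. Qed.
Lemma vscal_kemb c (a : V) : vscal (kemb c) a = vrscal c a.
Proof.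
  destruct K; simpl; auto. destruct a as [a1 a2]; simpl.
  rewrite !scal0l. f_equal. rewrite (oppE E z), scal0r, rv_add0; auto. apply add0l.
Qed.
Lemma vabs_real (a : V) : im a = z -> re (vabs a) = absE E (re a) /\ im (vabs a) = z.
Proof.
  destruct K; simpl; auto. destruct a as [a1 a2]; simpl. intros ->. split; auto. apply sm_sup_real.
Qed.
Lemma vabs_ok (a : V) : KVL_ok K E -> im (vabs a) = z /\ rv_le E z (re (vabs a)).
Proof.
  destruct K; simpl; intros H.
  - split; auto. apply abs_pos.
  - split; auto. apply sm_sup_pos; auto.
Qed.
Lemma vpos_iff (a : V) : vpos a <-> im a = z /\ rv_le E z (re a).
Proof.
  unfold vpos. destruct K; simpl.
  - split. intros H; split; auto. apply abs_id_inv; auto.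
    intros [_ H]. apply abs_id; auto.
  - destruct a as [a1 a2]; simpl. split.
    + intros H. injection H; intros H2 H1. subst a2. split; auto.
      apply (abs_id_inv E). rewrite <- sm_sup_real; auto.
    + intros [-> H]. rewrite sm_sup_real, abs_id; auto.
Qed.
End VcBase.

Ltac vsimp := repeat (rewrite ?re_add, ?im_add, ?re_opp, ?im_opp, ?re_sub, ?im_sub, ?re_rscal, ?im_rscal, ?re_zero, ?im_zero, ?re_mk, ?im_mk).

Section VcOrd.
Variable K : Kfield.
Variable E : RVL.
Local Notation V := (Vc K E).
Local Notation z := (@rv_zero E).

Lemma sub_eq0 (x y : rv_car E) : rv_add E x (rv_opp E y) = z <-> y = x.
Proof.
  split; intros H. replace y with (rv_add E y z) by apply rv_add0. rewrite <- H. vring [x;y].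
  subst; apply rv_addN.
Qed.

Lemma vle_iff (a b : V) : vle a b <-> im a = im b /\ rv_le E (re a) (re b).
Proof.
  unfold vle. rewrite vpos_iff. vsimp. rewrite sub_eq0.
  split; intros [H1 H2]; split; auto.
  apply (proj2 (le_sub E _ _)); auto. apply (proj1 (le_sub E _ _)); auto.
Qed.
Lemma in_rho_iff (a : V) : in_rho a <-> im a = z.
Proof.
  split.
  - intros [g [h [Hg [Hh ->]]]]. apply vpos_iff in Hg. apply vpos_iff in Hh.
    vsimp. destruct Hg as [-> _], Hh as [-> _]. vring (@nil (rv_car E)).
  - intros H. destruct (pos_decomp E (re a)) as [p [q [Hp [Hq Ha]]]].
    exists (mkV p), (mkV q). rewrite !vpos_iff. vsimp. split; [auto|split; [auto|]].
    apply vext; vsimp; auto. rewrite H. vring (@nil (rv_car E)).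
Qed.
Lemma vpos_rho (a : V) : vpos a -> in_rho a.
Proof. intros H. apply in_rho_iff. apply vpos_iff in H; tauto. Qed.
Lemma vpos_vle (a : V) : vpos a <-> vle vzero a.
Proof. rewrite vpos_iff, vle_iff. vsimp. split; intros [H1 H2]; auto. Qed.
Lemma vle_refl (a : V) : vle a a.
Proof. apply vle_iff. split; auto. apply rv_le_refl. Qed.
Lemma vle_trans (a b c : V) : vle a b -> vle b c -> vle a c.
Proof. rewrite !vle_iff. intros [H1 H2] [H3 H4]. split. congruence. eapply rv_le_trans; eauto. Qed.
Lemma vle_anti (a b : V) : vle a b -> vle b a -> a = b.
Proof. rewrite !vle_iff. intros [H1 H2] [H3 H4]. apply vext; auto. apply rv_le_anti; auto. Qed.
Lemma vle_add (a b c : V) : vle a b -> vle (vadd a c) (vadd b c).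
Proof. rewrite !vle_iff. intros [H1 H2]. vsimp. split. congruence. apply rv_le_add; auto. Qed.
Lemma vle_add2 (a b c d : V) : vle a b -> vle c d -> vle (vadd a c) (vadd b d).
Proof. rewrite !vle_iff. intros [H1 H2] [H3 H4]. vsimp. split. congruence. apply le_add2; auto. Qed.
Lemma vle_rscal c (a b : V) : 0 <= c -> vle a b -> vle (vrscal c a) (vrscal c b).
Proof. rewrite !vle_iff. intros Hc [H1 H2]. vsimp. split. congruence. apply le_scal; auto. Qed.
Lemma vle_rscal_l c d (a : V) : c <= d -> vpos a -> vle (vrscal c a) (vrscal d a).
Proof. rewrite vle_iff, vpos_iff. intros Hc [H1 H2]. vsimp. rewrite H1, !scal0r. split; auto. apply le_scal_l; auto. Qed.
Lemma vpos_add (a b : V) : vpos a -> vpos b -> vpos (vadd a b).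
Proof. rewrite !vpos_iff. intros [H1 H2] [H3 H4]. vsimp. rewrite H1, H3. split. apply rv_add0. apply pos_add; auto. Qed.
Lemma vpos_rscal c (a : V) : 0 <= c -> vpos a -> vpos (vrscal c a).
Proof. rewrite !vpos_iff. intros Hc [H1 H2]. vsimp. rewrite H1. split. apply scal0r. apply rv_le_scal; auto. Qed.
Lemma vpos_zero : vpos (@vzero K E).
Proof. apply vpos_iff. vsimp. split; auto. apply rv_le_refl. Qed.
Lemma vpos_abs (a : V) : KVL_ok K E -> vpos (vabs a).
Proof. intros H. apply vpos_iff. apply vabs_ok; auto. Qed.
Lemma vrscal1 (a : V) : vrscal 1 a = a.
Proof. apply vext; vsimp; apply rv_scal1. Qed.

Lemma varchi (d c : V) : vpos d -> (forall m : nat, vle (vrscal (INR m) d) c) -> d = vzero.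
Proof.
  intros Hd H. apply vpos_iff in Hd. destruct Hd as [H1 H2]. apply vext; vsimp; auto.
  apply (archiE E _ (re c)); auto. intros m. specialize (H m). apply vle_iff in H. rewrite re_rscal in H. tauto.
Qed.

Definition vmin (a b : V) : V := vrscal (/2) (vsub (vadd a b) (vabs (vsub a b))).
Lemma vmin_re (a b : V) : im a = z -> im b = z -> re (vmin a b) = minE E (re a) (re b) /\ im (vmin a b) = z.
Proof.
  intros Ha Hb. assert (Hd : im (vsub a b) = z) by (vsimp; rewrite Ha, Hb; vring (@nil (rv_car E))).
  destruct (vabs_real _ _ _ Hd) as [H1 H2]. unfold vmin, minE. vsimp. rewrite H1, H2, Ha, Hb, re_sub.
  split; auto. vring (@nil (rv_car E)).
Qed.
Lemma vmin_rho (a b : V) : in_rho a -> in_rho b -> in_rho (vmin a b).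
Proof. rewrite !in_rho_iff. intros. apply vmin_re; auto. Qed.
Lemma vmin_le_l (a b : V) : in_rho a -> in_rho b -> vle (vmin a b) a.
Proof.
  rewrite !in_rho_iff. intros Ha Hb. destruct (vmin_re _ _ Ha Hb) as [H1 H2].
  apply vle_iff. rewrite H1, H2, Ha. split; auto. apply min_le_l.
Qed.
Lemma vmin_le_r (a b : V) : in_rho a -> in_rho b -> vle (vmin a b) b.
Proof.
  rewrite !in_rho_iff. intros Ha Hb. destruct (vmin_re _ _ Ha Hb) as [H1 H2].
  apply vle_iff. rewrite H1, H2, Hb. split; auto. apply min_le_r.
Qed.
Lemma vmin_glb (w a b : V) : in_rho a -> in_rho b -> vle w a -> vle w b -> vle w (vmin a b).
Proof.
  rewrite !in_rho_iff. intros Ha Hb H3 H4. destruct (vmin_re _ _ Ha Hb) as [H1 H2].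
  rewrite vle_iff in *. rewrite H1, H2. destruct H3, H4. split. congruence. apply min_glb; auto.
Qed.

Lemma sumV_le n (g h : nat -> V) : (forall k, (k < n)%nat -> vle (g k) (h k)) -> vle (sumV n g) (sumV n h).
Proof.
  induction n; intros H; simpl. apply vle_refl. apply vle_add2; auto.
Qed.
Lemma sumV_pos n (g : nat -> V) : (forall k, (k < n)%nat -> vpos (g k)) -> vpos (sumV n g).
Proof. induction n; intros H; simpl. apply vpos_zero. apply vpos_add; auto. Qed.
Lemma sumV_ext n (g h : nat -> V) : (forall k, (k < n)%nat -> g k = h k) -> sumV n g = sumV n h.
Proof. induction n; intros H; simpl; auto. rewrite IHn, H; auto. Qed.
Lemma sumV_add n (g h : nat -> V) : sumV n (fun k => vadd (g k) (h k)) = vadd (sumV n g) (sumV n h).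
Proof.
  induction n; simpl. apply vext; vsimp; vring (@nil (rv_car E)).
  rewrite IHn. apply vext; vsimp.
  - vring [re (sumV n g); re (sumV n h); re (g n); re (h n)].
  - vring [im (sumV n g); im (sumV n h); im (g n); im (h n)].
Qed.
End VcOrd.

(** ** real analysis: the grid *)
Lemma ln_le' x y : 0 < x -> x <= y -> ln x <= ln y.
Proof. intros Hx Hxy. destruct (Req_dec x y). subst; lra. left. apply ln_increasing; lra. Qed.
Lemma exp_le' x y : x <= y -> exp x <= exp y.
Proof. intros H. destruct (Req_dec x y). subst; lra. left. apply exp_increasing; lra. Qed.

Lemma sumR_ext n g h : (forall k, (k < n)%nat -> g k = h k) -> sumR n g = sumR n h.
Proof. induction n; intros H; simpl; auto. rewrite IHn, H; auto. Qed.
Lemma sumR_plus n g h : sumR n (fun k => g k + h k) = sumR n g + sumR n h.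
Proof. induction n; simpl; auto. lra. rewrite IHn; ring. Qed.
Lemma sumR_scal n c g : sumR n (fun k => c * g k) = c * sumR n g.
Proof. induction n; simpl. ring. rewrite IHn; ring. Qed.
Lemma sumR_le n g h : (forall k, (k < n)%nat -> g k <= h k) -> sumR n g <= sumR n h.
Proof. induction n; intros H; simpl. lra. apply Rplus_le_compat; auto. Qed.
Lemma sumR_ge_term n g j : (forall k, (k < n)%nat -> 0 <= g k) -> (j < n)%nat -> g j <= sumR n g.
Proof.
  induction n; intros H Hj. lia. simpl. destruct (Nat.eq_dec j n).
  - subst. assert (0 <= sumR n g). { replace 0 with (sumR n (fun _ => 0)). apply sumR_le; intros k Hk; apply H; lia.
      clear; induction n; simpl; auto; lra. } lra.
  - assert (g j <= sumR n g) by (apply IHn; [intros k Hk; apply H|]; lia). specialize (H n ltac:(lia)); lra.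
Qed.
Lemma sumR_indic n (c : R) j : (j < n)%nat -> sumR n (fun k => if Nat.eq_dec k j then c else 0) = c.
Proof.
  induction n; intros Hj. lia. simpl. destruct (Nat.eq_dec n j).
  - subst. replace (sumR j _) with 0. ring. clear. assert (forall m, (m <= j)%nat -> 0 = sumR m (fun k => if Nat.eq_dec k j then c else 0)).
    { induction m; intros Hm; simpl; auto. destruct (Nat.eq_dec m j). lia. rewrite <- IHm; [ring|lia]. } apply H; lia.
  - rewrite IHn; [ring|lia].
Qed.

Definition SR n (r th : nat -> R) := sumR n (fun k => r k * ln (th k)).

Lemma prodR_Rpower n r th : prodR n (fun k => Rpower (th k) (r k)) = exp (SR n r th).
Proof.
  unfold SR, Rpower. induction n; simpl. rewrite exp_0; auto. rewrite IHn, exp_plus; auto.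
Qed.

Definition normz n r (g : nat -> R) : nat -> R := fun k => g k / exp (SR n r g).

Lemma normz_SR n r g : sumR n r = 1 -> (forall k, (k < n)%nat -> 0 < g k) -> SR n r (normz n r g) = 0.
Proof.
  intros Hs Hg. unfold SR at 1. unfold normz.
  rewrite (sumR_ext n _ (fun k => r k * ln (g k) + (- SR n r g) * r k)).
  rewrite sumR_plus, sumR_scal, Hs. fold (SR n r g). ring.
  intros k Hk. unfold Rdiv. rewrite ln_mult, ln_Rinv, ln_exp; auto. ring. apply exp_pos. apply Rinv_0_lt_compat, exp_pos.
Qed.

Fixpoint gridL (N : nat) (eta : R) (m : nat) : list (nat -> R) :=
  match m with
  | O => [fun _ => eta]
  | S m' => flat_map (fun g => map (fun a => fun k => if Nat.eq_dec k m' then INR a * eta else g k) (seq 1 N)) (gridL N eta m')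
  end.

Lemma gridL_pos N eta m g : 0 < eta -> In g (gridL N eta m) -> forall k, 0 < g k.
Proof.
  revert g; induction m; simpl; intros g He Hg k.
  - destruct Hg as [<-|[]]; auto.
  - apply in_flat_map in Hg. destruct Hg as [g0 [H0 H1]]. apply in_map_iff in H1.
    destruct H1 as [a [<- Ha]]. apply in_seq in Ha. destruct (Nat.eq_dec k m).
    + apply Rmult_lt_0_compat; auto. apply lt_0_INR; lia.
    + eapply IHm; eauto.
Qed.

Lemma gridL_mem N eta m (v : nat -> R) :
  (forall k, (k < m)%nat -> exists a, (1 <= a <= N)%nat /\ v k = INR a * eta) ->
  exists g, In g (gridL N eta m) /\ forall k, (k < m)%nat -> g k = v k.
Proof.
  induction m; intros H.
  - exists (fun _ => eta). split. simpl; auto. intros; lia.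
  - destruct IHm as [g0 [H0 H1]]. intros k Hk; apply H; lia.
    destruct (H m) as [a [Ha Hv]]. lia.
    exists (fun k => if Nat.eq_dec k m then INR a * eta else g0 k). split.
    + simpl. apply in_flat_map. exists g0. split; auto. apply in_map_iff. exists a. split; auto.
      apply in_seq. lia.
    + intros k Hk. destruct (Nat.eq_dec k m). subst; auto. apply H1; lia.
Qed.

Lemma ceil_grid eta N t : 0 < eta -> 0 < t -> t <= INR N * eta ->
  exists a, (1 <= a <= N)%nat /\ t <= INR a * eta <= t + eta.
Proof.
  intros He Ht. induction N; intros HN.
  - simpl in HN. lra.
  - destruct (Rle_dec t (INR N * eta)).
    + destruct IHN as [a [Ha Hb]]; auto. exists a; split; auto; lia.
    + exists (S N). split. lia. rewrite S_INR, Rmult_plus_distr_r, Rmult_1_l in *. split; lra.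
Qed.

Lemma exists_N n (r : nat -> R) eta : (forall k, (k < n)%nat -> 0 < r k) -> 0 < eta ->
  exists N : nat, (1 <= N)%nat /\ forall j, (j < n)%nat -> 0 <= ln eta + r j * ln (INR N).
Proof.
  intros Hr He. set (M := sumR n (fun j => Rabs (ln eta) / r j)).
  destruct (INR_unbounded (exp M + 1)) as [N HN].
  assert (H1 : (1 <= N)%nat). { destruct N. simpl in HN. pose proof (exp_pos M); lra. lia. }
  exists N. split; auto. intros j Hj.
  assert (Hm : Rabs (ln eta) / r j <= M).
  { apply (sumR_ge_term n (fun j => Rabs (ln eta) / r j)); auto. intros k Hk.
    apply Rmult_le_pos. apply Rabs_pos. left; apply Rinv_0_lt_compat; auto. }
  assert (HlnN : M <= ln (INR N)).
  { rewrite <- (ln_exp M) at 1. apply ln_le'. apply exp_pos. lra. }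
  pose proof (Hr j Hj).
  assert (Rabs (ln eta) <= r j * ln (INR N)).
  { apply (Rmult_le_compat_l (r j)) in Hm; [|lra]. unfold Rdiv in Hm.
    rewrite Rmult_comm, Rmult_assoc, Rinv_l, Rmult_1_r in Hm; [|lra].
    apply (Rmult_le_compat_l (r j)) in HlnN; lra. }
  pose proof (Rle_abs (- ln eta)). rewrite Rabs_Ropp in *. lra.
Qed.

Definition inparam n r (th : nat -> R) :=
  (forall k, (k < n)%nat -> 0 < th k) /\ prodR n (fun k => Rpower (th k) (r k)) = 1.

Lemma inparam_SR n r th : inparam n r th -> SR n r th = 0.
Proof. intros [_ H]. rewrite prodR_Rpower in H. rewrite <- exp_0 in H. apply exp_inv; auto. Qed.

Lemma grid_exists n r eta : (forall k, (k < n)%nat -> 0 < r k) -> sumR n r = 1 -> 0 < eta ->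
  exists L : list (nat -> R), (forall g, In g L -> inparam n r g) /\
    forall th, inparam n r th -> exists g, In g L /\ forall k, (k < n)%nat -> g k <= th k + eta.
Proof.
  intros Hr Hs He. destruct (exists_N n r eta Hr He) as [N [HN1 HN]].
  exists (map (normz n r) (gridL N eta n)). split.
  - intros g Hg. apply in_map_iff in Hg. destruct Hg as [g0 [<- Hg0]].
    pose proof (gridL_pos N eta n g0 He Hg0) as Hp.
    split. intros k Hk. unfold normz. unfold Rdiv. apply Rmult_lt_0_compat; auto. apply Rinv_0_lt_compat, exp_pos.
    rewrite prodR_Rpower, normz_SR, exp_0; auto.
  - intros th Hth. pose proof (inparam_SR _ _ _ Hth) as HS. destruct Hth as [Hpos _].
    assert (Hdom : forall g0, In g0 (gridL N eta n) -> 0 <= SR n r g0 -> forall k, normz n r g0 k <= g0 k).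
    { intros g0 Hg0 HS0 k. pose proof (gridL_pos N eta n g0 He Hg0 k). unfold normz.
      assert (1 <= exp (SR n r g0)) by (rewrite <- exp_0; apply exp_le'; auto).
      unfold Rdiv. rewrite <- (Rmult_1_r (g0 k)) at 2. apply Rmult_le_compat_l; [lra|].
      rewrite <- Rinv_1. apply Rinv_le_contravar; lra. }
    destruct (Classical_Prop.classic (exists j, (j < n)%nat /\ INR N * eta < th j)) as [[j [Hj Hbig]]|Hsmall].
    + destruct (gridL_mem N eta n (fun k => if Nat.eq_dec k j then INR N * eta else INR 1 * eta)) as [g0 [Hg0 Hv]].
      { intros k Hk. destruct (Nat.eq_dec k j). exists N; split; auto; lia. exists 1%nat; split; auto; lia. }
      assert (HS0 : 0 <= SR n r g0).
      { unfold SR. rewrite (sumR_ext n _ (fun k => ln eta * r k + (if Nat.eq_dec k j then r j * ln (INR N) else 0))).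
        rewrite sumR_plus, sumR_scal, Hs, sumR_indic; auto. rewrite Rmult_1_r. apply HN; auto.
        intros k Hk. rewrite Hv; auto. destruct (Nat.eq_dec k j).
        - subst. rewrite ln_mult. ring. apply lt_0_INR; lia. auto.
        - simpl. rewrite Rmult_1_l. ring. }
      exists (normz n r g0). split. apply in_map; auto. intros k Hk.
      eapply Rle_trans. apply Hdom; auto. rewrite Hv; auto. destruct (Nat.eq_dec k j).
      subst; lra. simpl. pose proof (Hpos k Hk). lra.
    + assert (Hv : forall k, (k < n)%nat -> exists a, (1 <= a <= N)%nat /\ th k <= INR a * eta <= th k + eta).
      { intros k Hk. apply ceil_grid; auto. destruct (Rle_dec (th k) (INR N * eta)); auto.
        exfalso. apply Hsmall. exists k. split; auto. lra. }
      set (af := fun k => epsilon (inhabits 0%nat) (fun a => (1 <= a <= N)%nat /\ th k <= INR a * eta <= th k + eta)).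
      assert (Haf : forall k, (k < n)%nat -> (1 <= af k <= N)%nat /\ th k <= INR (af k) * eta <= th k + eta).
      { intros k Hk. unfold af. apply epsilon_spec. apply Hv; auto. }
      destruct (gridL_mem N eta n (fun k => INR (af k) * eta)) as [g0 [Hg0 Hgv]].
      { intros k Hk. exists (af k). split; auto. apply Haf; auto. }
      assert (HS0 : 0 <= SR n r g0).
      { rewrite <- HS. unfold SR. apply sumR_le. intros k Hk. apply Rmult_le_compat_l. left; auto.
        apply ln_le'; auto. rewrite Hgv; auto. apply Haf; auto. }
      exists (normz n r g0). split. apply in_map; auto. intros k Hk.
      eapply Rle_trans. apply Hdom; auto. rewrite Hgv; auto. apply Haf; auto.
Qed.

Lemma amgm n r th : (forall k, (k < n)%nat -> 0 < r k) -> sumR n r = 1 -> inparam n r th ->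
  1 <= sumR n (fun k => r k * th k).
Proof.
  intros Hr Hs Hth. pose proof (inparam_SR _ _ _ Hth) as HS. destruct Hth as [Hp _].
  apply (Rle_trans _ (sumR n (fun k => r k * 1 + r k * ln (th k)))).
  - rewrite sumR_plus. fold (SR n r th). rewrite HS. rewrite (sumR_ext n _ r). lra. intros; ring.
  - apply sumR_le. intros k Hk. rewrite <- Rmult_plus_distr_l. apply Rmult_le_compat_l. left; auto.
    rewrite <- (exp_ln (th k)) at 2; auto. apply exp_ineq1_le.
Qed.

Lemma inparam_one n r : inparam n r (fun _ => 1).
Proof.
  split. intros; lra. rewrite prodR_Rpower. unfold SR. rewrite (sumR_ext n _ (fun _ => 0)).
  replace (sumR n (fun _ => 0)) with 0. apply exp_0. clear; induction n; simpl; auto; lra.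
  intros; rewrite ln_1; ring.
Qed.

Ltac mapre l := lazymatch l with | [?a] => constr:([re a]) | ?a :: ?l' => let r := mapre l' in constr:(re a :: r) end.
Ltac mapim l := lazymatch l with | [?a] => constr:([im a]) | ?a :: ?l' => let r := mapim l' in constr:(im a :: r) end.
Ltac vceq l := apply vext; vsimp; [ let l1 := mapre l in vring l1 | let l2 := mapim l in vring l2 ].

Section VcMore.
Variable K : Kfield.
Variable E : RVL.
Local Notation V := (Vc K E).

Lemma sumV_rscal n c (g : nat -> V) : sumV n (fun k => vrscal c (g k)) = vrscal c (sumV n g).
Proof.
  induction n; simpl. apply vext; vsimp; rewrite scal0r; auto.
  rewrite IHn. vceq [sumV n g; g n].
Qed.
Lemma vopp_rscal (a : V) : vopp a = vrscal (-1) a.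
Proof. vceq [a]. Qed.
Lemma vsub_eq0 (a b : V) : vsub a b = vzero -> a = b.
Proof.
  intros H. apply vext.
  - assert (re (vsub a b) = re (@vzero K E)) by (rewrite H; auto). rewrite re_sub, re_zero in H0.
    symmetry. apply (proj1 (sub_eq0 E _ _)); auto.
  - assert (im (vsub a b) = im (@vzero K E)) by (rewrite H; auto). rewrite im_sub, im_zero in H0.
    symmetry. apply (proj1 (sub_eq0 E _ _)); auto.
Qed.

Definition vminL (a0 : V) (l : list V) : V := fold_right (@vmin K E) a0 l.
Lemma vminL_rho a0 l : in_rho a0 -> (forall x, In x l -> in_rho x) -> in_rho (vminL a0 l).
Proof.
  induction l; simpl; intros H0 H; auto. apply vmin_rho; auto.
Qed.
Lemma vminL_le0 a0 l : in_rho a0 -> (forall x, In x l -> in_rho x) -> vle (vminL a0 l) a0.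
Proof.
  induction l; simpl; intros H0 H. apply vle_refl.
  eapply vle_trans; [apply vmin_le_r|apply IHl]; auto. apply vminL_rho; auto.
Qed.
Lemma vminL_le a0 l x : in_rho a0 -> (forall x, In x l -> in_rho x) -> In x l -> vle (vminL a0 l) x.
Proof.
  induction l; simpl; intros H0 H Hx. destruct Hx.
  destruct Hx as [<-|Hx]. apply vmin_le_l; auto. apply vminL_rho; auto.
  eapply vle_trans; [apply vmin_le_r|apply IHl]; auto. apply vminL_rho; auto.
Qed.
Lemma vminL_glb a0 l w : in_rho a0 -> (forall x, In x l -> in_rho x) -> vle w a0 -> (forall x, In x l -> vle w x) -> vle w (vminL a0 l).
Proof.
  induction l; simpl; intros H0 H Hw1 Hw2; auto. apply vmin_glb; auto. apply vminL_rho; auto.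
Qed.
End VcMore.

Section Maps.
Variable K : Kfield.
Variables E F : RVL.
Variable G : Vc K E -> Prop.
Variable T : Vc K E -> Vc K F.
Hypothesis HG : sublattice G.
Hypothesis HT : Klinear_on G T.

Lemma G_rscal c x : G x -> G (vrscal c x).
Proof. intros H. rewrite <- vscal_kemb. apply HG; auto. Qed.
Lemma T_rscal c x : G x -> T (vrscal c x) = vrscal c (T x).
Proof. intros H. rewrite <- !vscal_kemb. apply HT; auto. Qed.
Lemma G_add x y : G x -> G y -> G (vadd x y). Proof. apply HG. Qed.
Lemma T_add x y : G x -> G y -> T (vadd x y) = vadd (T x) (T y). Proof. apply HT. Qed.
Lemma G_zero : G vzero. Proof. apply HG. Qed.
Lemma G_abs x : G x -> G (vabs x). Proof. apply HG. Qed.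
Lemma G_opp x : G x -> G (vopp x). Proof. intros; rewrite vopp_rscal; apply G_rscal; auto. Qed.
Lemma T_opp x : G x -> T (vopp x) = vopp (T x).
Proof. intros; rewrite !vopp_rscal; apply T_rscal; auto. Qed.
Lemma G_sub x y : G x -> G y -> G (vsub x y). Proof. intros; apply G_add; auto; apply G_opp; auto. Qed.
Lemma T_sub x y : G x -> G y -> T (vsub x y) = vsub (T x) (T y).
Proof. intros; unfold vsub; rewrite T_add, T_opp; auto; apply G_opp; auto. Qed.
Lemma T_zero : T vzero = vzero.
Proof.
  replace (@vzero K E) with (vrscal 0 (@vzero K E)) by (apply vext; vsimp; apply scal0l).
  rewrite T_rscal by apply G_zero. apply vext; vsimp; apply scal0l.
Qed.
Lemma G_sumV n g : (forall k, (k < n)%nat -> G (g k)) -> G (sumV n g).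
Proof. induction n; simpl; intros H. apply G_zero. apply G_add; auto. Qed.
Lemma T_sumV n g : (forall k, (k < n)%nat -> G (g k)) -> T (sumV n g) = sumV n (fun k => T (g k)).
Proof.
  induction n; simpl; intros H. apply T_zero. rewrite T_add, IHn; auto. apply G_sumV; auto.
Qed.

Hypothesis HH : vl_hom_on G T.
Lemma G_vmin a b : G a -> G b -> G (vmin K E a b).
Proof. intros. unfold vmin. apply G_rscal, G_sub, G_abs, G_sub; auto. apply G_add; auto. Qed.
Lemma T_vmin a b : G a -> G b -> T (vmin K E a b) = vmin K F (T a) (T b).
Proof.
  intros. unfold vmin. rewrite T_rscal, T_sub, <- HH, T_add, T_sub; auto.
  all: try apply G_sub; try apply G_add; try apply G_abs; try apply G_sub; auto.
Qed.
Lemma G_vminL a0 l : G a0 -> (forall x, In x l -> G x) -> G (vminL K E a0 l).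
Proof. induction l; simpl; intros; auto. apply G_vmin; auto. Qed.
Lemma T_vminL a0 l : G a0 -> (forall x, In x l -> G x) -> T (vminL K E a0 l) = vminL K F (T a0) (map T l).
Proof.
  induction l; simpl; intros; auto. rewrite T_vmin, IHl; auto. apply G_vminL; auto.
Qed.
Lemma T_pos a : G a -> vpos a -> vpos (T a).
Proof. unfold vpos. intros Ha H. rewrite HH, H; auto. Qed.
Lemma T_mono a b : G a -> G b -> vle a b -> vle (T a) (T b).
Proof.
  unfold vle. intros Ha Hb H. rewrite <- T_sub; auto. apply T_pos; auto. apply G_sub; auto.
Qed.
End Maps.

Definition term (K : Kfield) (E : RVL) n r (f : nat -> Vc K E) (th : nat -> R) : Vc K E :=
  sumV n (fun k => vrscal (r k * th k) (vabs (f k))).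

Lemma wgm_set_iff K E n (f : nat -> Vc K E) r s : wgm_set n f r s <-> exists th, inparam n r th /\ s = term K E n r f th.
Proof.
  unfold wgm_set, inparam, term. split.
  - intros [th [H1 [H2 H3]]]. exists th; auto.
  - intros [th [[H1 H2] H3]]. exists th; auto.
Qed.

Section Main.
Variable K : Kfield.
Variables E F : RVL.
Variable n : nat.
Variable r : nat -> R.
Hypothesis HokE : KVL_ok K E.
Hypothesis HokF : KVL_ok K F.
Hypothesis Hr : forall k, (k < n)%nat -> 0 < r k < 1.
Hypothesis Hs : sumR n r = 1.

Lemma Hr0 : forall k, (k < n)%nat -> 0 < r k.
Proof. intros k Hk; apply Hr; auto. Qed.

Lemma term_pos (D : RVL) (HD : KVL_ok K D) f th : (forall k, (k < n)%nat -> 0 <= th k) -> vpos (term K D n r f th).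
Proof.
  intros H. apply sumV_pos. intros k Hk. apply vpos_rscal. apply Rmult_le_pos; auto. left; apply Hr0; auto.
  apply vpos_abs; auto.
Qed.

Definition Uf (D : RVL) (f : nat -> Vc K D) := sumV n (fun k => vrscal (r k) (vabs (f k))).

Lemma term_le (D : RVL) (HD : KVL_ok K D) f th th' eta :
  (forall k, (k < n)%nat -> th' k <= th k + eta) ->
  vle (term K D n r f th') (vadd (term K D n r f th) (vrscal eta (Uf D f))).
Proof.
  intros H. eapply vle_trans.
  - apply (sumV_le _ _ n _ (fun k => vrscal (r k * (th k + eta)) (vabs (f k)))).
    intros k Hk. apply vle_rscal_l. apply Rmult_le_compat_l; auto. left; apply Hr0; auto.
    apply vpos_abs; auto.
  - replace (sumV n (fun k => vrscal (r k * (th k + eta)) (vabs (f k)))) with (vadd (term K D n r f th) (vrscal eta (Uf D f))).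
    apply vle_refl.
    unfold term, Uf. rewrite <- sumV_rscal, <- sumV_add. apply sumV_ext. intros k Hk. vceq [vabs (f k)].
Qed.

Lemma wgm_pos (D : RVL) (HD : KVL_ok K D) (f : nat -> Vc K D) (x : Vc K D) : is_wgm n f r x -> vpos x.
Proof.
  intros [Hx1 [Hx2 Hx3]]. apply (proj2 (vpos_vle _ _ _)). apply Hx3. apply vpos_rho, vpos_zero.
  intros s Hs'. apply wgm_set_iff in Hs'. destruct Hs' as [th [Hth ->]]. apply (proj1 (vpos_vle _ _ _)).
  apply term_pos; auto. intros k Hk. left; apply Hth; auto.
Qed.

Lemma part3 (G : Vc K E -> Prop) (T : Vc K E -> Vc K F) :
  sublattice G -> Klinear_on G T -> vl_hom_on G T ->
  forall (f : nat -> Vc K E), (forall k, (k < n)%nat -> G (f k)) ->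
  forall x : Vc K E, is_wgm n f r x -> G x ->
  forall y : Vc K F, is_wgm n (fun k => T (f k)) r y -> T x = y.
Proof.
  intros HG HT HH f Hf x Hx HGx y Hy.
  pose proof (G_rscal _ _ G HG) as GR. pose proof (G_abs _ _ G HG) as GA. pose proof (G_sub _ _ G HG) as GS.
  pose proof (G_sumV _ _ G HG) as GSum. pose proof (G_vminL _ _ G HG) as GMin.
  pose proof (T_rscal _ _ _ G T HT) as TR. pose proof (T_sub _ _ _ G T HG HT) as TS.
  pose proof (T_sumV _ _ _ G T HG HT) as TSum. pose proof (T_vminL _ _ _ G T HG HT HH) as TMin.
  pose proof (T_pos _ _ _ G T HH) as TP. pose proof (T_mono _ _ _ G T HG HT HH) as TM.
  assert (HGt : forall th, G (term K E n r f th)).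
  { intros th. apply GSum. intros k Hk. apply GR; auto. }
  assert (HTt : forall th, T (term K E n r f th) = term K F n r (fun k => T (f k)) th).
  { intros th. unfold term. rewrite TSum. apply sumV_ext. intros k Hk.
    rewrite TR, <- HH; auto. intros k Hk. apply GR, GA; auto. }
  assert (HGu : G (Uf E f)).
  { apply GSum. intros k Hk. apply GR; auto. }
  pose proof (wgm_pos E HokE f x Hx) as Hxpos.
  pose proof (TP x HGx Hxpos) as HTxpos.
  destruct Hx as [Hx1 [Hx2 Hx3]]. destruct Hy as [Hy1 [Hy2 Hy3]].
  assert (S1 : vle (T x) y).
  { apply Hy3. apply vpos_rho; auto. intros s Hs'. apply wgm_set_iff in Hs'. destruct Hs' as [th [Hth ->]].
    rewrite <- HTt. apply TM; auto. apply Hx2. apply wgm_set_iff. exists th; auto. }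
  assert (S2 : forall eta, 0 < eta -> vle y (vadd (T x) (vrscal eta (T (Uf E f))))).
  { intros eta Heta. destruct (grid_exists n r eta Hr0 Hs Heta) as [L [HL1 HL2]].
    set (a0 := term K E n r f (fun _ => 1)).
    set (z := vminL K E a0 (map (term K E n r f) L)).
    assert (Hrho : forall th, in_rho (term K E n r f th) \/ True) by auto.
    assert (Hta : forall th, inparam n r th -> in_rho (term K E n r f th)).
    { intros th Hth. apply vpos_rho, term_pos; auto. intros k Hk. left; apply Hth; auto. }
    assert (HmapL : forall w, In w (map (term K E n r f) L) -> in_rho w).
    { intros w Hw. apply in_map_iff in Hw. destruct Hw as [g [<- Hg]]. apply Hta; auto. }
    assert (Ha0 : in_rho a0) by (apply Hta, inparam_one).
    assert (HGz : G z).
    { apply GMin. apply HGt. intros w Hw. apply in_map_iff in Hw. destruct Hw as [g [<- Hg]]; auto. }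
    set (w := vsub z (vrscal eta (Uf E f))).
    assert (HGw : G w) by (apply GS; auto; apply GR; auto).
    assert (Hwx : vle w x).
    { apply Hx3.
      - apply in_rho_iff. unfold w. vsimp. assert (Hz0 : im z = rv_zero) by (apply in_rho_iff; unfold z; apply vminL_rho; auto). rewrite Hz0.
        assert (im (Uf E f) = rv_zero) by (apply in_rho_iff, vpos_rho; unfold Uf; apply sumV_pos; intros k Hk; apply vpos_rscal; [left; apply Hr0; auto| apply vpos_abs; auto]).
        rewrite H. vring (@nil (rv_car E)).
      - intros s Hs'. apply wgm_set_iff in Hs'. destruct Hs' as [th [Hth ->]].
        destruct (HL2 th Hth) as [g [HgL Hg]].
        assert (Hz : vle z (vadd (term K E n r f th) (vrscal eta (Uf E f)))).
        { eapply vle_trans. apply vminL_le; auto. apply in_map; eauto. apply term_le; auto. }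
        unfold w. apply (vle_add _ _ _ _ (vopp (vrscal eta (Uf E f)))) in Hz.
        replace (term K E n r f th) with (vadd (vadd (term K E n r f th) (vrscal eta (Uf E f))) (vopp (vrscal eta (Uf E f)))).
        exact Hz. vceq [term K E n r f th; Uf E f]. }
    assert (HTw : vle (T w) (T x)) by (apply (T_mono K E F G T HG HT HH); auto).
    assert (HyTz : vle y (T z)).
    { unfold z. rewrite TMin; [|apply HGt|intros w0 Hw0; apply in_map_iff in Hw0; destruct Hw0 as [g [<- Hg]]; auto].
      assert (Hs1 : forall th, inparam n r th -> vle y (T (term K E n r f th)) /\ in_rho (T (term K E n r f th))).
      { intros th Hth. rewrite HTt. split. apply Hy2. apply wgm_set_iff. exists th; auto.
        apply vpos_rho, term_pos; auto. intros k Hk; left; apply Hth; auto. }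
      apply vminL_glb.
      - apply Hs1, inparam_one.
      - intros w0 Hw0. rewrite map_map in Hw0. apply in_map_iff in Hw0. destruct Hw0 as [g [<- Hg]]. apply Hs1; auto.
      - apply Hs1, inparam_one.
      - intros w0 Hw0. rewrite map_map in Hw0. apply in_map_iff in Hw0. destruct Hw0 as [g [<- Hg]]. apply Hs1; auto. }
    assert (HTz : T z = vadd (T w) (vrscal eta (T (Uf E f)))).
    { unfold w. rewrite TS, TR; auto. vceq [T z; T (Uf E f)]. }
    rewrite HTz in HyTz. eapply vle_trans. apply HyTz. apply vle_add; auto. }
  set (d := vsub y (T x)).
  assert (Hd : vpos d) by exact S1.
  assert (Hdm : forall m : nat, vle (vrscal (INR m) d) (T (Uf E f))).
  { intros m. assert (Hm : 0 < INR m + 1) by (pose proof (pos_INR m); lra).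
    specialize (S2 (/ (INR m + 1)) (Rinv_0_lt_compat _ Hm)).
    apply (vle_add _ _ _ _ (vopp (T x))) in S2.
    apply (vle_rscal _ _ (INR m + 1)) in S2; [|lra].
    eapply vle_trans. apply (vle_rscal_l _ _ (INR m) (INR m + 1)); auto; lra.
    replace (T (Uf E f)) with (vrscal (INR m + 1) (vadd (vadd (T x) (vrscal (/ (INR m + 1)) (T (Uf E f)))) (vopp (T x)))).
    unfold d. replace (vsub y (T x)) with (vadd y (vopp (T x))) by reflexivity. exact S2.
    vceq [T x; T (Uf E f)]. }
  pose proof (varchi _ _ d _ Hd Hdm) as Hd0. symmetry. apply vsub_eq0. exact Hd0.
Qed.

Lemma sumV_const (D : RVL) m (c : nat -> R) (v : Vc K D) : sumV m (fun k => vrscal (c k) v) = vrscal (sumR m c) v.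
Proof.
  induction m; simpl. apply vext; vsimp; rewrite scal0l; auto.
  rewrite IHm. vceq [v].
Qed.

Lemma wgm_const (D : RVL) (HD : KVL_ok K D) (a : Vc K D) : is_wgm n (fun _ => a) r (vabs a).
Proof.
  split; [|split].
  - apply vpos_rho, vpos_abs; auto.
  - intros s Hs'. apply wgm_set_iff in Hs'. destruct Hs' as [th [Hth ->]]. unfold term.
    rewrite sumV_const. rewrite <- (vrscal1 _ _ (vabs a)) at 1. apply vle_rscal_l.
    apply amgm; auto. apply Hr0. apply vpos_abs; auto.
  - intros y Hy Hys.
    assert (Hm : wgm_set n (fun _ => a) r (term K D n r (fun _ => a) (fun _ => 1))).
    { apply wgm_set_iff. exists (fun _ => 1). split. apply inparam_one. reflexivity. }
    specialize (Hys _ Hm). unfold term in Hys. rewrite sumV_const in Hys.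
    rewrite (sumR_ext n _ r) in Hys by (intros; ring). rewrite Hs, vrscal1 in Hys. exact Hys.
Qed.

Lemma lin_on_all (T : Vc K E -> Vc K F) : Klinear T -> Klinear_on (fun _ => True) T.
Proof. intros [H1 H2]. split; intros; auto. Qed.
Lemma sub_all : sublattice (fun _ : Vc K E => True).
Proof. repeat split; auto. Qed.

Lemma part1 (T : Vc K E -> Vc K F) : Klinear T -> positive_map T ->
     forall (f : nat -> Vc K E) (x : Vc K E) (y : Vc K F),
       is_wgm n f r x -> is_wgm n (fun k => T (vabs (f k))) r y -> vle (T x) y.
Proof.
  intros HT HP f x y Hx Hy. pose proof (lin_on_all T HT) as HT'. pose proof sub_all as HG.
  pose proof (T_sub _ _ _ _ T HG HT') as TS. pose proof (T_rscal _ _ _ _ T HT') as TR.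
  pose proof (T_sumV _ _ _ _ T HG HT') as TSum.
  assert (TM : forall a b, vle a b -> vle (T a) (T b)).
  { intros a b H. unfold vle in *. rewrite <- TS; auto. }
  destruct Hx as [Hx1 [Hx2 Hx3]]. destruct Hy as [Hy1 [Hy2 Hy3]].
  apply Hy3.
  - destruct Hx1 as [g [h [Hg [Hh ->]]]]. exists (T g), (T h). repeat split; auto.
  - intros s Hs'. apply wgm_set_iff in Hs'. destruct Hs' as [th [Hth ->]].
    replace (term K F n r (fun k => T (vabs (f k))) th) with (T (term K E n r f th)).
    apply TM, Hx2. apply wgm_set_iff. exists th; auto.
    unfold term. rewrite TSum; auto. apply sumV_ext. intros k Hk. rewrite TR; auto.
    f_equal. symmetry. apply HP. apply vpos_abs; auto.
Qed.

Lemma part2 (T : Vc K E -> Vc K F) : Klinear T ->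
     (vl_hom T <->
      forall (f : nat -> Vc K E) (x : Vc K E) (y : Vc K F),
        is_wgm n f r x -> is_wgm n (fun k => T (f k)) r y -> T x = y).
Proof.
  intros HT. split.
  - intros Hh f x y Hx Hy. eapply (part3 (fun _ => True) T sub_all (lin_on_all T HT)); eauto.
    intros a _. apply Hh.
  - intros H a. symmetry. apply (H (fun _ => a)). apply wgm_const; auto. apply wgm_const; auto.
Qed.
End Main.

Theorem proposition4p1 (K : Kfield) (E F : RVL) (n : nat) (r : nat -> R) :
  KVL_ok K E -> KVL_ok K F -> wgm_closed K E -> wgm_closed K F ->
  (forall k, (k < n)%nat -> 0 < r k < 1) -> sumR n r = 1 ->
  (* (1) *)
  (forall T : Vc K E -> Vc K F, Klinear T -> positive_map T ->
     forall (f : nat -> Vc K E) (x : Vc K E) (y : Vc K F),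
       is_wgm n f r x -> is_wgm n (fun k => T (vabs (f k))) r y -> vle (T x) y) /\
  (* (2) *)
  (forall T : Vc K E -> Vc K F, Klinear T ->
     (vl_hom T <->
      forall (f : nat -> Vc K E) (x : Vc K E) (y : Vc K F),
        is_wgm n f r x -> is_wgm n (fun k => T (f k)) r y -> T x = y)) /\
  (* (3) *)
  (forall (G : Vc K E -> Prop) (T : Vc K E -> Vc K F),
     sublattice G -> Klinear_on G T -> vl_hom_on G T ->
     forall (f : nat -> Vc K E), (forall k, (k < n)%nat -> G (f k)) ->
     forall x : Vc K E, is_wgm n f r x -> G x ->
     forall y : Vc K F, is_wgm n (fun k => T (f k)) r y -> T x = y).
Proof.
  intros HokE HokF _ _ Hr Hs. split; [|split].
  - intros T; eapply part1; eauto.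
  - intros T; eapply part2; eauto.
  - intros G T; eapply part3; eauto.
Qed.
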